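(* Let $p\equiv 1\pmod 4$ be a prime and let $u$ be an integer with $u^2\equiv -1\pmod p$ and $1\le u<p/2$. Define points $\mathbf{x}_i=(x_i,y_i)\in\mathbb{Z}^2$ (the extended Brillhart sequence) by $\mathbf{x}_0=(p,0)$, $\mathbf{x}_1=(u,1)$, and, for $i\ge 1$ with $x_i>0$, write $x_{i-1}=q_ix_i+r_i$ with $0\le r_i<x_i$ (so $q_i=\lfloor x_{i-1}/x_i\rfloor$) and set $\mathbf{x}_{i+1}=\mathbf{x}_{i-1}-q_i\mathbf{x}_i=(r_i,\,y_{i-1}-q_iy_i)$. Define also the modified Lagrange (ML) sequence $\mathbf{x}'_i$ by $\mathbf{x}'_0=(p,0)$, $\mathbf{x}'_1=(u,1)$, and, for $i\ge1$, as long as $\|\mathbf{x}'_i\|\le\|\mathbf{x}'_{i-1}\|$, \[ q'_i=\left\lfloor\frac{\mathbf{x}'_i\cdot\mathbf{x}'_{i-1}}{\|\mathbf{x}'_i\|^2}\right\rfloor,\qquad \mathbf{x}'_{i+1}=\mathbf{x}'_{i-1}-q'_i\mathbf{x}'_i. \] Then for every $i\ge 1$ such that $x_i>|y_i|$ (and for which the ML step is defined), $q_i=q'_i$; equivalently, \[ \left\lfloor\frac{x_{i-1}}{x_i}\right\rfloor=\left\lfloor\frac{x_{i-1}x_i+y_{i-1}y_i}{x_i^2+y_i^2}\right\rfloor, \] so that the Brillhart sequence and the ML sequence coincide until the ML algorithm terminates.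
   Context: Here $\cdot$ denotes the standard dot product and $\|\cdot\|$ the Euclidean norm on $\mathbb{R}^2$. The sequence $(x_i)$ is exactly the sequence of remainders of the Euclidean algorithm applied to $p$ and $u$. *)

(* Defs.v *)
From Stdlib Require Import ZArith Znumtheory Lia.
Open Scope Z_scope.

Definition vsub (a b : Z * Z) : Z * Z := (fst a - fst b, snd a - snd b).
Definition vscale (q : Z) (b : Z * Z) : Z * Z := (q * fst b, q * snd b).
Definition dot (a b : Z * Z) : Z := fst a * fst b + snd a * snd b.
Definition norm2 (a : Z * Z) : Z := dot a a.

(* Extended Brillhart sequence: state (x_n, x_{n+1}).
   x_{i+1} = x_{i-1} - q_i x_i with q_i = floor(x_{i-1} / x_i)
   (first coordinates).  Only meaningful while the first coordinates
   are positive; the theorem assumes this explicitly. *)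
Fixpoint brill_pair (p u : Z) (n : nat) : (Z * Z) * (Z * Z) :=
  match n with
  | O => ((p, 0), (u, 1))
  | S n' => let '(a, b) := brill_pair p u n' in
            (b, vsub a (vscale (fst a / fst b) b))
  end.

Definition brill (p u : Z) (n : nat) : Z * Z := fst (brill_pair p u n).

Definition brill_q (p u : Z) (i : nat) : Z :=
  fst (brill p u (Nat.pred i)) / fst (brill p u i).

(* Only meaningful while
   ||x'_i|| <= ||x'_{i-1}||; the theorem assumes this explicitly. *)
Fixpoint ml_pair (p u : Z) (n : nat) : (Z * Z) * (Z * Z) :=
  match n with
  | O => ((p, 0), (u, 1))
  | S n' => let '(a, b) := ml_pair p u n' in
            (b, vsub a (vscale (dot b a / norm2 b) b))
  end.

Definition ml (p u : Z) (n : nat) : Z * Z := fst (ml_pair p u n).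

Definition ml_q (p u : Z) (i : nat) : Z :=
  dot (ml p u i) (ml p u (Nat.pred i)) / norm2 (ml p u i).

(* Main.v *)
Require Import Defs.
From Stdlib Require Import ZArith Znumtheory Lia.
Open Scope Z_scope.

Definition Inv (p u : Z) (a b : Z * Z) : Prop :=
  0 <= fst b < fst a /\ exists e, (e = 1 \/ e = -1) /\ 0 <= e * snd b /\
  e * snd a <= 0 /\ - (e * snd a) <= e * snd b /\
  fst a * snd b - fst b * snd a = e * p /\
  (p | fst a - u * snd a) /\ (p | fst b - u * snd b).

Lemma Inv_step p u a b : Inv p u a b -> 0 < fst b ->
  Inv p u b (vsub a (vscale (fst a / fst b) b)).
Proof.
  destruct a as [a1 a2], b as [b1 b2]; unfold Inv, vsub, vscale; simpl.
  intros [[H0 H1] [e [He [Hb [Ha [Hab [Hdet [D1 D2]]]]]]]] Hpos.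
  pose proof (Z.div_mod a1 b1 ltac:(lia)) as Hdm.
  pose proof (Z.mod_pos_bound a1 b1 Hpos) as Hr.
  set (q := a1 / b1) in *. set (r := a1 mod b1) in *.
  assert (Hq : 1 <= q).
  { destruct (Z.le_gt_cases 1 q) as [?|Hq']; [lia|].
    assert (b1 * q <= 0) by (apply Z.mul_nonneg_nonpos; lia). lia. }
  split. lia.
  exists (- e). split. lia.
  assert (0 <= q * (e * b2)) by (apply Z.mul_nonneg_nonneg; lia).
  split. lia. split. lia. split.
  { replace (- (- e * b2)) with (e * b2) by ring.
    replace (- e * (a2 - q * b2)) with (- (e * a2) + q * (e * b2)) by ring.
    assert (e * b2 <= q * (e * b2)) by (rewrite <- (Z.mul_1_l (e*b2)) at 1; apply Z.mul_le_mono_nonneg_r; lia). lia. }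
  split. { replace (b1 * (a2 - q * b2) - (a1 - q * b1) * b2) with (- (a1 * b2 - b1 * a2)) by ring. lia. }
  split. exact D2.
  replace (a1 - q * b1 - u * (a2 - q * b2)) with ((a1 - u * a2) - q * (b1 - u * b2)) by ring.
  apply Z.divide_sub_r. exact D1. apply Z.divide_mul_r. exact D2.
Qed.

Lemma floor_eq p u a1 a2 b1 b2 : 0 < p -> Inv p u (a1, a2) (b1, b2) -> (p | u * u + 1) ->
  0 < b1 -> Z.abs b2 < b1 ->
  a1 / b1 = (a1 * b1 + a2 * b2) / (b1 ^ 2 + b2 ^ 2).
Proof.
  unfold Inv; simpl.
  intros Hp [[H0 H1] [e [He [Hb [Ha [Hab [Hdet [D1 D2]]]]]]]] [k3 K3] Hpos Habs.
  destruct D1 as [k0 K0]. destruct D2 as [k1 K1].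
  pose proof (Z.div_mod a1 b1 ltac:(lia)) as Hdm.
  pose proof (Z.mod_pos_bound a1 b1 Hpos) as Hr.
  set (q := a1 / b1) in *. set (r := a1 mod b1) in *.
  assert (Hq : 1 <= q).
  { destruct (Z.le_gt_cases 1 q) as [?|Hq']; [lia|].
    assert (b1 * q <= 0) by (apply Z.mul_nonneg_nonpos; lia). lia. }
  set (c2 := a2 - q * b2).
  set (X := r * b1 + c2 * b2).
  set (m := k3*c2*b2 + u*c2*k1 + (k0 - q*k1)*u*b2 + (k0 - q*k1)*k1*p).
  assert (HX : X = p * m).
  { assert (Hr' : r = a1 - b1 * q) by lia.
    assert (Ha1 : a1 = u * a2 + k0 * p) by lia.
    assert (Hb1 : b1 = u * b2 + k1 * p) by lia.
    assert (X - p * m = (u*u+1 - k3*p) * c2 * b2).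
    { unfold X, m, c2. rewrite Hr'. rewrite Ha1, Hb1. ring. }
    rewrite K3 in H. lia. }
  assert (Hee : e * e = 1) by lia.
  set (B := e * b2). set (C := - e * c2).
  assert (HB : 0 <= B) by (unfold B; lia).
  assert (HC : 0 <= C).
  { unfold C, c2. replace (- e * (a2 - q * b2)) with (- (e * a2) + q * (e * b2)) by ring.
    assert (0 <= q * (e * b2)) by (apply Z.mul_nonneg_nonneg; lia). lia. }
  assert (Hcb : c2 * b2 = - (B * C)).
  { unfold B, C. transitivity ((e*e) * (c2 * b2)). rewrite Hee; ring. ring. }
  assert (HBb : B < b1) by (unfold B; destruct He as [E|E]; rewrite E; lia).
  assert (Hdet2 : b1 * C + r * B = p).
  { unfold B, C, c2. assert (Hr' : r = a1 - b1 * q) by lia. rewrite Hr'.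
    transitivity (e * (a1 * b2 - b1 * a2)). ring. rewrite Hdet. rewrite Z.mul_assoc, Hee. ring. }
  assert (HXlow : 0 <= X).
  { destruct (Z.eq_dec C 0) as [E|E].
    - unfold X. rewrite Hcb, E. rewrite Z.mul_0_r. assert (0 <= r * b1) by (apply Z.mul_nonneg_nonneg; lia). lia.
    - assert (B * C < b1 * C) by (apply Z.mul_lt_mono_pos_r; lia).
      assert (0 <= r * B) by (apply Z.mul_nonneg_nonneg; lia).
      assert (- p < X) by (unfold X; lia).
      rewrite HX in H3 |- *. assert (-1 < m). { apply (Z.mul_lt_mono_pos_l p); lia. } apply Z.mul_nonneg_nonneg; lia. }
  assert (HXup : X < b1 ^ 2 + b2 ^ 2).
  { unfold X. rewrite Hcb. assert (r * b1 < b1 * b1) by (apply Z.mul_lt_mono_pos_r; lia).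
    assert (0 <= B * C) by (apply Z.mul_nonneg_nonneg; lia).
    assert (0 <= b2 * b2) by apply Z.square_nonneg. rewrite !Z.pow_2_r. lia. }
  apply (Z.div_unique _ _ q X). lia.
  unfold X, c2. rewrite Hdm at 1. change (Z.pow_pos b1 2) with (b1^2). change (Z.pow_pos b2 2) with (b2^2). ring.
Qed.

Lemma pair_S p u n : brill_pair p u (S n) =
  (snd (brill_pair p u n),
   vsub (fst (brill_pair p u n))
     (vscale (fst (fst (brill_pair p u n)) / fst (snd (brill_pair p u n))) (snd (brill_pair p u n)))).
Proof. simpl. destruct (brill_pair p u n). reflexivity. Qed.

Lemma brill_S p u n : brill p u (S n) = snd (brill_pair p u n).
Proof. unfold brill. rewrite pair_S. reflexivity. Qed.

Lemma Inv_all p u n : 0 <= u < p ->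
  (forall j : nat, (1 <= j <= n)%nat -> 0 < fst (brill p u j)) ->
  Inv p u (fst (brill_pair p u n)) (snd (brill_pair p u n)).
Proof.
  intros Hu. induction n as [|n IH]; intros Hpos.
  - simpl. unfold Inv; simpl. split. lia. exists 1. split. lia.
    repeat split; try lia.
    exists 1. ring. exists 0. ring.
  - rewrite pair_S. simpl fst; simpl snd. apply Inv_step.
    + apply IH. intros j Hj. apply Hpos. lia.
    + rewrite <- brill_S. apply Hpos. lia.
Qed.

Lemma mono p u m : 0 <= u < p -> forall n, (1 <= n <= m)%nat ->
  (forall j : nat, (1 <= j <= m)%nat -> 0 < fst (brill p u j)) ->
  fst (brill p u m) <= fst (brill p u n) /\
  Z.abs (snd (brill p u n)) <= Z.abs (snd (brill p u m)).
Proof.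
  intros Hu. induction m as [|m IH]; intros n Hn Hpos. lia.
  destruct (Nat.eq_dec n (S m)) as [E|E]. subst. lia.
  assert (Hm : (1 <= m)%nat) by lia.
  destruct (IH n ltac:(lia) ltac:(intros j Hj; apply Hpos; lia)) as [I1 I2].
  pose proof (Inv_all p u m Hu ltac:(intros j Hj; apply Hpos; lia)) as HI.
  rewrite brill_S. unfold brill in I1, I2.
  destruct (brill_pair p u m) as [a b]. simpl in *.
  destruct HI as [[H0 H1] [e [He [Hb [Ha [Hab _]]]]]].
  unfold brill in *. destruct He as [E'|E']; rewrite E' in *; split; lia.
Qed.

Lemma agree p u i : 0 < p -> 0 <= u < p -> (p | u * u + 1) ->
  (forall j : nat, (1 <= j <= i)%nat -> 0 < fst (brill p u j)) ->
  fst (brill p u i) > Z.abs (snd (brill p u i)) ->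
  forall n, (n < i)%nat -> ml_pair p u n = brill_pair p u n.
Proof.
  intros Hp Hu Hd Hpos Hx. induction n as [|n IH]; intros Hn. reflexivity.
  rewrite pair_S. simpl. rewrite IH by lia.
  pose proof (Inv_all p u n Hu ltac:(intros j Hj; apply Hpos; lia)) as HI.
  pose proof (mono p u i Hu (S n) ltac:(lia) Hpos) as [M1 M2].
  pose proof (Hpos (S n) ltac:(lia)) as P.
  rewrite brill_S in M1, M2, P.
  destruct (brill_pair p u n) as [[a1 a2] [b1 b2]]. simpl in *.
  f_equal. f_equal. f_equal. unfold dot, norm2; simpl.
  rewrite (floor_eq p u a1 a2 b1 b2 Hp HI Hd P).
  2: lia. unfold dot; simpl. f_equal. ring. change (Z.pow_pos b1 2) with (b1^2). change (Z.pow_pos b2 2) with (b2^2). ring.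
Qed.

Theorem mainTheorem1 (p u : Z) (i : nat) :
  prime p -> p mod 4 = 1 ->
  (u * u) mod p = (-1) mod p -> 1 <= u -> 2 * u < p ->
  (1 <= i)%nat ->
  (* the Brillhart sequence is defined up to index i+1 *)
  (forall j : nat, (1 <= j <= i)%nat -> 0 < fst (brill p u j)) ->
  (* the ML step is defined at all indices 1..i *)
  (forall j : nat, (1 <= j <= i)%nat ->
     norm2 (ml p u j) <= norm2 (ml p u (Nat.pred j))) ->
  fst (brill p u i) > Z.abs (snd (brill p u i)) ->
  brill_q p u i = ml_q p u i /\
  fst (brill p u (Nat.pred i)) / fst (brill p u i) =
    (fst (brill p u (Nat.pred i)) * fst (brill p u i)
     + snd (brill p u (Nat.pred i)) * snd (brill p u i))
    / (fst (brill p u i) ^ 2 + snd (brill p u i) ^ 2).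
Proof.
  intros _ _ Hmod Hu1 Hu2 Hi Hpos _ Hx.
  assert (Hp : 0 < p) by lia.
  assert (Hu : 0 <= u < p) by lia.
  assert (Hd : (p | u * u + 1)).
  { exists (u * u / p - (-1) / p).
    pose proof (Z.div_mod (u*u) p ltac:(lia)).
    pose proof (Z.div_mod (-1) p ltac:(lia)). lia. }
  destruct i as [|k]. lia.
  pose proof (agree p u (S k) Hp Hu Hd Hpos Hx k ltac:(lia)) as Hag.
  pose proof (Inv_all p u k Hu ltac:(intros j Hj; apply Hpos; lia)) as HI.
  pose proof (Hpos (S k) ltac:(lia)) as P.
  unfold brill_q, ml_q, ml. simpl Nat.pred.
  rewrite brill_S in *. unfold brill. replace (S k) with (S k) by reflexivity.
  assert (Hml : fst (ml_pair p u (S k)) = snd (ml_pair p u k)).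
  { simpl. destruct (ml_pair p u k). reflexivity. }
  rewrite Hml, Hag.
  destruct (brill_pair p u k) as [[a1 a2] [b1 b2]]. simpl in *.
  assert (E : a1 / b1 = (a1 * b1 + a2 * b2) / (b1 ^ 2 + b2 ^ 2))
    by (apply (floor_eq p u a1 a2 b1 b2 Hp HI Hd P); lia).
  split; [|exact E].
  rewrite E. unfold dot, norm2, dot; simpl. f_equal. ring.
  change (Z.pow_pos b1 2) with (b1^2). change (Z.pow_pos b2 2) with (b2^2). ring.
Qed.
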